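(* Let $Q_5$ be the edge graph of the $5$-dimensional hypercube (vertices $\{0,1\}^5$, two vertices adjacent iff they differ in exactly one coordinate). Up to a permutation of the colours (simultaneous permutation of rows and columns of the colour adjacency matrix), the colour adjacency matrices of perfect $2$-colourings of $Q_5$ are exactly the six matrices \[ \begin{pmatrix} 0 & 5 \\ 5 & 0 \end{pmatrix}, \begin{pmatrix} 1 & 4 \\ 4 & 1 \end{pmatrix}, \begin{pmatrix} 2 & 3 \\ 1 & 4 \end{pmatrix}, \begin{pmatrix} 2 & 3 \\ 3 & 2 \end{pmatrix}, \begin{pmatrix} 3 & 2 \\ 2 & 3 \end{pmatrix}, \begin{pmatrix} 4 & 1 \\ 1 & 4 \end{pmatrix}, \] and the colour adjacency matrices of perfect $3$-colourings of $Q_5$ are exactly the eight matrices \[ \begin{pmatrix} 0 & 1 & 4 \\ 1 & 0 & 4 \\ 2 & 2 & 1 \end{pmatrix}, \begin{pmatrix} 0 & 3 & 2 \\ 3 & 0 & 2 \\ 1 & 1 & 3 \end{pmatrix}, \begin{pmatrix} 0 & 5 & 0 \\ 1 & 0 & 4 \\ 0 & 2 & 3 \end{pmatrix}, \begin{pmatrix} 1 & 0 & 4 \\ 0 & 1 & 4 \\ 1 & 3 & 1 \end{pmatrix}, \begin{pmatrix} 1 & 0 & 4 \\ 0 & 1 & 4 \\ 2 & 2 & 1 \end{pmatrix}, \begin{pmatrix} 1 & 2 & 2 \\ 2 & 1 & 2 \\ 1 & 1 & 3 \end{pmatrix}, \begin{pmatrix} 2 & 1 & 2 \\ 1 & 2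 & 2 \\ 1 & 1 & 3 \end{pmatrix}, \begin{pmatrix} 3 & 0 & 2 \\ 0 & 3 & 2 \\ 1 & 1 & 3 \end{pmatrix}. \] In particular each of these matrices is realized by some perfect colouring of $Q_5$.
   Context: An $m$-colouring of a graph $G=(V,E)$ is a partition of $V$ into $m$ disjoint nonempty sets $V_1,\dots,V_m$ (the colours; adjacent vertices may have the same colour). It is perfect if for all $i,j$ every vertex of colour $i$ has the same number $a_{ij}$ of neighbours of colour $j$; the matrix $A=(a_{ij})$ is its colour adjacency matrix. Relabelling colours by a permutation $\sigma$ replaces $A$ by $(a_{\sigma(i)\sigma(j)})$. *)

(* Defs.v *)
From mathcomp Require Import all_boot all_order all_algebra all_fingroup.
Set Implicit Arguments. Unset Strict Implicit. Unset Printing Implicit Defensive.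

Definition Q5 := {ffun 'I_5 -> bool}.

Definition adjQ5 (x y : Q5) : bool := #|[set i : 'I_5 | x i != y i]| == 1%N.

(* An m-colouring is a surjective map c : V -> 'I_m (the colour classes
   V_i = c^-1(i) are disjoint, nonempty and cover V). *)
Definition colouring (m : nat) (c : Q5 -> 'I_m) : Prop :=
  forall k : 'I_m, exists v : Q5, c v = k.

Definition perfect_colouring (m : nat) (c : Q5 -> 'I_m) (A : 'M[nat]_m) : Prop :=
  colouring c /\
  forall (v : Q5) (j : 'I_m), #|[set w : Q5 | adjQ5 v w & c w == j]| = A (c v) j.

Definition relabel (m : nat) (s : 'S_m) (A : 'M[nat]_m) : 'M[nat]_m :=
  \matrix_(i, j) A (s i) (s j).

Definition mxl (m : nat) (rows : seq (seq nat)) : 'M[nat]_m :=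
  \matrix_(i, j) nth 0%N (nth [::] rows i) j.

Definition list2 : seq 'M[nat]_2 :=
  [:: mxl 2 [:: [:: 0; 5]; [:: 5; 0]];
      mxl 2 [:: [:: 1; 4]; [:: 4; 1]];
      mxl 2 [:: [:: 2; 3]; [:: 1; 4]];
      mxl 2 [:: [:: 2; 3]; [:: 3; 2]];
      mxl 2 [:: [:: 3; 2]; [:: 2; 3]];
      mxl 2 [:: [:: 4; 1]; [:: 1; 4]]]%N.

Definition list3 : seq 'M[nat]_3 :=
  [:: mxl 3 [:: [:: 0; 1; 4]; [:: 1; 0; 4]; [:: 2; 2; 1]];
      mxl 3 [:: [:: 0; 3; 2]; [:: 3; 0; 2]; [:: 1; 1; 3]];
      mxl 3 [:: [:: 0; 5; 0]; [:: 1; 0; 4]; [:: 0; 2; 3]];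
      mxl 3 [:: [:: 1; 0; 4]; [:: 0; 1; 4]; [:: 1; 3; 1]];
      mxl 3 [:: [:: 1; 0; 4]; [:: 0; 1; 4]; [:: 2; 2; 1]];
      mxl 3 [:: [:: 1; 2; 2]; [:: 2; 1; 2]; [:: 1; 1; 3]];
      mxl 3 [:: [:: 2; 1; 2]; [:: 1; 2; 2]; [:: 1; 1; 3]];
      mxl 3 [:: [:: 3; 0; 2]; [:: 0; 3; 2]; [:: 1; 1; 3]]]%N.

(* Main.v *)
Require Import Defs.
From mathcomp Require Import all_boot all_order all_algebra all_fingroup.
From mathcomp Require Import zify.
Set Implicit Arguments. Unset Strict Implicit. Unset Printing Implicit Defensive.

Definition nbtab : seq (seq nat) :=
[::[::1;2;4;8;16];[::0;3;5;9;17];[::3;0;6;10;18];[::2;1;7;11;19];[::5;6;0;12;20];[::4;7;1;13;21];[::7;4;2;14;22];[::6;5;3;15;23];[::9;10;12;0;24];[::8;11;13;1;25];[::11;8;14;2;26];[::10;9;15;3;27];[::13;14;8;4;28];[::12;15;9;5;29];[::15;12;10;6;30];[::14;13;11;7;31];[::17;18;20;24;0];[::16;19;21;25;1];[::19;16;22;26;2];[::18;17;23;27;3];[::21;22;16;28;4];[::20;23;17;29;5];[::23;20;18;30;6];[::22;21;19;31;7];[::25;26;28;16;8];[::24;27;29;17;9];[::27;24;30;18;10];[::26;25;31;19;11];[::29;30;24;20;12];[::28;31;25;21;13];[::31;28;26;22;14];[::30;29;27;23;15]].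

Definition nb k := nth [::] nbtab k.

Fixpoint hasS (f : nat -> bool) (s : seq nat) :=
  if s is x :: s' then (if f x then true else hasS f s') else false.
Fixpoint allS (f : nat -> bool) (s : seq nat) :=
  if s is x :: s' then (if f x then allS f s' else false) else true.

Section Search.
Variables (m : nat) (A : nat -> nat -> nat).
Definition okv (p : seq nat) n u :=
  let cols := [seq nth 0 p w | w <- nb u & w < n] in
  let cu := nth 0 p u in
  all (fun j => count (pred1 j) cols <= A cu j) (iota 0 m).
Definition okp p := let n := size p in let k := n.-1 in
  okv p n k && all (fun u => if u < n then okv p n u else true) (nb k).
Definition final p :=
  [&& size p == 32, all (fun x => x < m) p, all (fun j => j \in p) (iota 0 m) &
      all (fun u => all (fun j => count (fun w => nth 0 p w == j) (nb u) == A (nth 0 p u) j) (iota 0 m)) (iota 0 32)].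
Fixpoint srch fuel p :=
  match fuel with
  | 0 => final p
  | f.+1 => hasS (fun col => let p' := rcons p col in if okp p' then srch f p' else false) (iota 0 m)
  end.
End Search.

Definition Ar (r : seq (seq nat)) i j := nth 0 (nth [::] r i) j.













Definition rowsL2 : seq (seq (seq nat)) :=
  [:: [:: [:: 0; 5]; [:: 5; 0]];
      [:: [:: 1; 4]; [:: 4; 1]];
      [:: [:: 2; 3]; [:: 1; 4]];
      [:: [:: 2; 3]; [:: 3; 2]];
      [:: [:: 3; 2]; [:: 2; 3]];
      [:: [:: 4; 1]; [:: 1; 4]]].
Definition rowsL3 : seq (seq (seq nat)) :=
  [:: [:: [:: 0; 1; 4]; [:: 1; 0; 4]; [:: 2; 2; 1]];
      [:: [:: 0; 3; 2]; [:: 3; 0; 2]; [:: 1; 1; 3]];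
      [:: [:: 0; 5; 0]; [:: 1; 0; 4]; [:: 0; 2; 3]];
      [:: [:: 1; 0; 4]; [:: 0; 1; 4]; [:: 1; 3; 1]];
      [:: [:: 1; 0; 4]; [:: 0; 1; 4]; [:: 2; 2; 1]];
      [:: [:: 1; 2; 2]; [:: 2; 1; 2]; [:: 1; 1; 3]];
      [:: [:: 2; 1; 2]; [:: 1; 2; 2]; [:: 1; 1; 3]];
      [:: [:: 3; 0; 2]; [:: 0; 3; 2]; [:: 1; 1; 3]]].
Definition perms2 : seq (seq nat) := [:: [::0;1]; [::1;0]].
Definition perms3 : seq (seq nat) :=
  [:: [::0;1;2]; [::1;0;2]; [::2;1;0]; [::0;2;1]; [::1;2;0]; [::2;0;1]].
Definition relb (m : nat) (sg : seq nat) (r r' : seq (seq nat)) :=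
  all (fun i => all (fun j => Ar r' i j == Ar r (nth 0 sg i) (nth 0 sg j)) (iota 0 m)) (iota 0 m).
Definition closureb m perms rowsL r := has (fun sg => has (fun r' => relb m sg r r') rowsL) perms.
Definition ordc m r := sort (fun i j => Ar r j j <= Ar r i i) (iota 0 m).
Definition srchall m r := allS (fun c0 => srch m (Ar r) 31 [:: c0]) (ordc m r).

Definition supp3 (r : seq (seq nat)) :=
  allS (fun i => allS (fun j => (Ar r i j == 0) == (Ar r j i == 0)) (iota 0 3)) (iota 0 3).
Definition hasN3 (r : seq (seq nat)) :=
  hasS (fun n0 => hasS (fun n1 => let n2 := 32 - n0 - n1 in
     if n0 * Ar r 0 1 == n1 * Ar r 1 0 then
       if n0 * Ar r 0 2 == n2 * Ar r 2 0 then n1 * Ar r 1 2 == n2 * Ar r 2 1 else false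
     else false) (iota 1 (31 - n0))) (iota 1 30).
Definition test3 (r : seq (seq nat)) :=
  if supp3 r then if hasN3 r then if srchall 3 r then closureb 3 perms3 rowsL3 r else true else true else true.
Definition check3 :=
  all (fun a00 => all (fun a01 =>
  all (fun a10 => all (fun a11 =>
  all (fun a20 => all (fun a21 =>
    test3 [:: [:: a00; a01; 5 - a00 - a01]; [:: a10; a11; 5 - a10 - a11]; [:: a20; a21; 5 - a20 - a21]])
   (iota 0 (6 - a20))) (iota 0 6))
   (iota 0 (6 - a10))) (iota 0 6))
   (iota 0 (6 - a00))) (iota 0 6).
Definition hasN2 (r : seq (seq nat)) :=
  hasS (fun n0 => n0 * Ar r 0 1 == (32 - n0) * Ar r 1 0) (iota 1 31).
Definition test2 (r : seq (seq nat)) :=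
  if hasN2 r then if srchall 2 r then closureb 2 perms2 rowsL2 r else true else true.
Definition check2 :=
  all (fun a00 => all (fun a10 => test2 [:: [:: a00; 5 - a00]; [:: a10; 5 - a10]]) (iota 0 6)) (iota 0 6).

Lemma check2_ok : check2 = true. Proof. by vm_compute. Qed.
Lemma check3_ok : check3 = true. Proof. by vm_compute. Qed.

Lemma mem_iota0 x n : (x \in iota 0 n) = (x < n).
Proof. by rewrite mem_iota. Qed.

Lemma hasS_has f s : hasS f s = has f s.
Proof. by elim: s => //= x s ->; case: (f x). Qed.
Lemma allS_all f s : allS f s = all f s.
Proof. by elim: s => //= x s ->; case: (f x). Qed.

Definition nbchk :=
  all (fun k => [&& size (nb k) == 5, uniq (nb k) & all (fun w => w < 32) (nb k)]) (iota 0 32).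
Lemma nbchk_ok : nbchk = true. Proof. by vm_compute. Qed.

Lemma nb_prop k : k < 32 -> [/\ size (nb k) = 5, uniq (nb k) & forall w, w \in nb k -> w < 32].
Proof.
move=> Hk; have /allP /(_ k) := nbchk_ok; rewrite mem_iota0 => /(_ Hk).
by case/and3P => /eqP -> -> /allP H; split.
Qed.

Definition Pn m (A : nat -> nat -> nat) (f : nat -> nat) :=
  [/\ forall k, k < 32 -> f k < m,
      forall j, j < m -> exists2 k, k < 32 & f k = j &
      forall k j, k < 32 -> j < m -> count (fun l => f l == j) (nb k) = A (f k) j].

Lemma prefix_nth (f : nat -> nat) n u : u < n -> nth 0 (map f (iota 0 n)) u = f u.
Proof. by move=> Hu; rewrite (nth_map 0) ?size_iota // nth_iota. Qed.

Lemma okp_sound m A f n : Pn m A f -> 0 < n <= 32 -> okp m A (map f (iota 0 n)).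
Proof.
case=> Hf _ Hc /andP[Hn0 Hn].
set p := map f (iota 0 n).
have Sp : size p = n by rewrite size_map size_iota.
have Hv : forall u, u < n -> okv m A p n u.
  move=> u Hu; apply/allP => j; rewrite mem_iota0 => Hj.
  rewrite count_map count_filter prefix_nth // -(Hc u j) //; last by apply: leq_trans Hn.
  apply: sub_count => w /=; rewrite /preim /= => /andP[H1 H2].
  by move: H1; rewrite prefix_nth.
rewrite /okp Sp Hv ?prednK //=.
apply/allP => u _; case: ifP => // /Hv //.
Qed.

Lemma srch_complete m A f : Pn m A f ->
  forall d n, n + d = 32 -> 0 < n -> srch m A d (map f (iota 0 n)).
Proof.
move=> HP; have [Hf Hs Hc] := HP.
elim=> [|d IH] n Hnd Hn0.
  rewrite addn0 in Hnd; subst n.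
  change (final m A (map f (iota 0 32))).
  rewrite /final size_map size_iota eqxx andTb.
  apply/and3P; split.
  - by apply/allP => x /mapP [k]; rewrite mem_iota0 => Hk ->; apply: Hf.
  - apply/allP => j; rewrite mem_iota0 => Hj; have [k Hk <-] := Hs j Hj.
    by apply: map_f; rewrite mem_iota0.
  - apply/allP => u; rewrite mem_iota0 => Hu; apply/allP => j; rewrite mem_iota0 => Hj.
    rewrite prefix_nth // -(Hc u j) //; apply/eqP/eq_in_count => w Hw.
    have [_ _ H] := nb_prop Hu.
    by cbv beta; rewrite prefix_nth // H.
have Hn : n < 32 by lia.
rewrite /= hasS_has; apply/hasP; exists (f n); first by rewrite mem_iota0 Hf.
have -> : rcons (map f (iota 0 n)) (f n) = map f (iota 0 n.+1).
  by rewrite -map_rcons -addn1 iotaD cats1.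
have Hok : 0 < n.+1 <= 32 by apply/andP; split => //.
rewrite (okp_sound HP Hok).
apply: IH => //; lia.
Qed.

Lemma final_sound m A p : final m A p -> Pn m A (fun k => nth 0 p k).
Proof.
case/and4P => /eqP Sp /allP Hlt /allP Hcol /allP Hcnt; split.
- by move=> k Hk; apply: Hlt; rewrite mem_nth // Sp.
- move=> j Hj; have Hjp : j \in p by apply: Hcol; rewrite mem_iota0.
  by exists (index j p); [rewrite -Sp index_mem | rewrite nth_index].
- move=> k j Hk Hj.
  have Hk' : k \in iota 0 32 by rewrite mem_iota0.
  have Hj' : j \in iota 0 m by rewrite mem_iota0.
  by have /allP /(_ j Hj') /eqP := Hcnt k Hk'.
Qed.

Definition V (k : nat) : Q5 := [ffun i : 'I_5 => odd (k %/ 2 ^ i)].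
Definition o0 : 'I_5 := @Ordinal 5 0 isT.
Definition o1 : 'I_5 := @Ordinal 5 1 isT.
Definition o2 : 'I_5 := @Ordinal 5 2 isT.
Definition o3 : 'I_5 := @Ordinal 5 3 isT.
Definition o4 : 'I_5 := @Ordinal 5 4 isT.
Definition enc (x : Q5) : nat := x o0 + 2 * x o1 + 4 * x o2 + 8 * x o3 + 16 * x o4.
Definition encn (k : nat) : nat :=
  odd (k %/ 2 ^ 0) + 2 * odd (k %/ 2 ^ 1) + 4 * odd (k %/ 2 ^ 2) + 8 * odd (k %/ 2 ^ 3)
  + 16 * odd (k %/ 2 ^ 4).
Lemma encn_ok : all (fun k => encn k == k) (iota 0 32). Proof. by vm_compute. Qed.

Lemma Venc k : k < 32 -> enc (V k) = k.
Proof.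
move=> Hk; have /allP /(_ k) := encn_ok; rewrite mem_iota0 => /(_ Hk) /eqP E.
by rewrite /enc !ffunE; exact: E.
Qed.

Lemma enc_lt x : enc x < 32.
Proof. by rewrite /enc; case: (x o0); case: (x o1); case: (x o2); case: (x o3); case: (x o4). Qed.

Lemma encK x : V (enc x) = x.
Proof.
apply/ffunP => i; rewrite ffunE.
case: i => [[|[|[|[|[|//]]]]] Hi].
- rewrite (_ : Ordinal Hi = o0); last exact: val_inj.
  by rewrite /enc; case: (x o0); case: (x o1); case: (x o2); case: (x o3); case: (x o4).
- rewrite (_ : Ordinal Hi = o1); last exact: val_inj.
  by rewrite /enc; case: (x o0); case: (x o1); case: (x o2); case: (x o3); case: (x o4).
- rewrite (_ : Ordinal Hi = o2); last exact: val_inj.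
  by rewrite /enc; case: (x o0); case: (x o1); case: (x o2); case: (x o3); case: (x o4).
- rewrite (_ : Ordinal Hi = o3); last exact: val_inj.
  by rewrite /enc; case: (x o0); case: (x o1); case: (x o2); case: (x o3); case: (x o4).
- rewrite (_ : Ordinal Hi = o4); last exact: val_inj.
  by rewrite /enc; case: (x o0); case: (x o1); case: (x o2); case: (x o3); case: (x o4).
Qed.

Lemma V_inj k l : k < 32 -> l < 32 -> V k = V l -> k = l.
Proof. by move=> Hk Hl E; rewrite -(Venc Hk) -(Venc Hl) E. Qed.

Definition bitsdiff k l := count (fun i => odd (k %/ 2 ^ i) != odd (l %/ 2 ^ i)) (iota 0 5).
Definition adjchk :=
  all (fun k => all (fun l => (bitsdiff k l == 1) == (l \in nb k)) (iota 0 32)) (iota 0 32).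
Lemma adjchk_ok : adjchk = true. Proof. by vm_compute. Qed.

Lemma card_count (T : finType) (t : seq T) (Q P : pred T) :
  uniq t -> (forall w, Q w = (w \in t)) -> #|[set w | Q w && P w]| = count P t.
Proof.
move=> Ut HQ; rewrite -size_filter -(card_uniqP _); last exact: filter_uniq.
by apply: eq_card => w; rewrite inE mem_filter HQ andbC.
Qed.

Lemma card5 (P : pred 'I_5) : #|[set i | P i]| = count P (enum 'I_5).
Proof.
rewrite -(card_count (Q := predT)) ?enum_uniq //.
by move=> w; rewrite mem_enum.
Qed.

Lemma adjV k l : k < 32 -> l < 32 -> adjQ5 (V k) (V l) = (l \in nb k).
Proof.
move=> Hk Hl; rewrite /adjQ5 card5.
rewrite (eq_count (a2 := preim val (fun i => odd (k %/ 2 ^ i) != odd (l %/ 2 ^ i)))); last first.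
  by move=> i; rewrite /= !ffunE.
rewrite -count_map val_enum_ord.
have /allP /(_ k) := adjchk_ok; rewrite mem_iota0 => /(_ Hk) /allP /(_ l).
by rewrite mem_iota0 => /(_ Hl) /eqP.
Qed.

Lemma cardV k (P : pred Q5) : k < 32 ->
  #|[set w | adjQ5 (V k) w & P w]| = count (fun l => P (V l)) (nb k).
Proof.
move=> Hk; have [_ Unb Hnb] := nb_prop Hk.
rewrite -(count_map V P) (card_count (t := map V (nb k))) //.
  rewrite map_inj_in_uniq // => a b /Hnb Ha /Hnb Hb; exact: V_inj.
move=> w; rewrite -(encK w) adjV ?enc_lt //.
apply/idP/mapP => [H|[b Hb E]]; first by exists (enc w).
by rewrite (V_inj (enc_lt w) (Hnb b Hb) E).
Qed.

Lemma col_to_Pn m (c : Q5 -> 'I_m) (A : 'M[nat]_m) (An : nat -> nat -> nat) :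
  perfect_colouring c A -> (forall i j : 'I_m, An i j = A i j) ->
  Pn m An (fun l => val (c (V l))).
Proof.
case=> Hcol Hp HA; split.
- by move=> k _; apply: ltn_ord.
- move=> j Hj; have [v Hv] := Hcol (Ordinal Hj).
  by exists (enc v); [apply: enc_lt | rewrite encK Hv].
- move=> k j Hk Hj.
  rewrite (eq_count (a2 := fun l => c (V l) == Ordinal Hj)) //.
  by rewrite -(cardV (fun w => c w == Ordinal Hj) Hk) Hp -HA.
Qed.

Lemma Pn_to_col m' (A : 'M[nat]_m'.+1) An f :
  Pn m'.+1 An f -> (forall i j : 'I_m'.+1, An i j = A i j) ->
  perfect_colouring (fun v => (inord (f (enc v)) : 'I_m'.+1)) A.
Proof.
case=> Hf Hs Hc HA; split.
- move=> k; have [l Hl Hfl] := Hs k (ltn_ord k).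
  by exists (V l); rewrite Venc // Hfl inord_val.
- move=> v j; rewrite -{1}(encK v) cardV ?enc_lt //.
  rewrite (eq_in_count (a2 := fun l => f l == j)); last first.
    move=> l Hl /=; have [_ _ Hnb] := nb_prop (enc_lt v).
    rewrite Venc ?Hnb //.
    by rewrite -(inj_eq val_inj) /= inordK // Hf // Hnb.
  have -> := Hc (enc v) j (enc_lt v) (ltn_ord j).
  by rewrite -HA inordK // Hf // enc_lt.
Qed.

Lemma relabel_col m (c : Q5 -> 'I_m) (s : 'S_m) (A : 'M[nat]_m) :
  perfect_colouring c (relabel s A) -> perfect_colouring (fun v => s (c v)) A.
Proof.
case=> Hcol Hp; split.
- move=> k; have [v Hv] := Hcol ((s^-1)%g k); exists v; by rewrite Hv permKV.
- move=> v j.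
  have -> : [set w | adjQ5 v w & s (c w) == j] = [set w | adjQ5 v w & c w == (s^-1)%g j].
    apply/setP => w; rewrite !inE; congr (_ && _).
    by rewrite -{1}(permKV s j) (inj_eq perm_inj).
  by rewrite Hp mxE permKV.
Qed.

Definition tr (u v : Q5) : Q5 := [ffun i => addb (u i) (v i)].
Lemma trK u : involutive (tr u).
Proof. by move=> v; apply/ffunP => i; rewrite !ffunE addKb. Qed.
Lemma adj_tr u v w : adjQ5 (tr u v) (tr u w) = adjQ5 v w.
Proof.
rewrite /adjQ5; suff -> : [set i | tr u v i != tr u w i] = [set i | v i != w i] by [].
apply/setP => i; rewrite !inE !ffunE.
by case: (u i); case: (v i); case: (w i).
Qed.

Lemma tr_col m (c : Q5 -> 'I_m) (A : 'M[nat]_m) u :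
  perfect_colouring c A -> perfect_colouring (fun v => c (tr u v)) A.
Proof.
case=> Hcol Hp; split.
- move=> k; have [v Hv] := Hcol k; exists (tr u v); by rewrite trK.
- move=> v j.
  have -> : [set w | adjQ5 v w & c (tr u w) == j] =
            tr u @^-1: [set w | adjQ5 (tr u v) w & c w == j].
    by apply/setP => w; rewrite !inE adj_tr.
  by rewrite card_preimset ?Hp //; apply: (can_inj (trK u)).
Qed.

Lemma col_at0 m (c : Q5 -> 'I_m) (A : 'M[nat]_m) (k : 'I_m) :
  perfect_colouring c A -> exists c', perfect_colouring c' A /\ c' (V 0) = k.
Proof.
move=> Hc; have [Hcol _] := Hc; have [u Hu] := Hcol k.
exists (fun v => c (tr u v)); split; first exact: tr_col.
rewrite -Hu; congr (c _); apply/ffunP => i; rewrite !ffunE div0n /=.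
by rewrite addbF.
Qed.

Lemma sum_eq_lt a m : \sum_(0 <= j < m) (a == j : nat) = (a < m).
Proof.
elim: m => [|m IH]; first by rewrite big_geq.
by rewrite big_nat_recr //= IH ltnS; case: ltngtP.
Qed.

Lemma sum_count_lt (f : nat -> nat) m s :
  \sum_(0 <= j < m) count (fun l => f l == j) s = count (fun l => f l < m) s.
Proof.
elim: s => [|x s IH] /=; first by rewrite big1.
by rewrite big_split /= IH sum_eq_lt.
Qed.

Lemma Pn_rowsum m A f i : Pn m A f -> i < m -> \sum_(0 <= j < m) A i j = 5.
Proof.
case=> Hf Hs Hc Hi; have [k Hk <-] := Hs i Hi.
have [S5 _ Hnb] := nb_prop Hk.
have E : count (fun l => f l < m) (nb k) = 5.
  by rewrite -S5 -count_predT; apply: eq_in_count => l Hl; rewrite /= Hf // Hnb.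
rewrite -E -sum_count_lt; apply: eq_big_nat => j /andP[_ Hj]; by rewrite Hc.
Qed.

Lemma adj_sym v w : adjQ5 v w = adjQ5 w v.
Proof.
rewrite /adjQ5; suff -> : [set i | v i != w i] = [set i | w i != v i] by [].
by apply/setP => i; rewrite !inE eq_sym.
Qed.

Lemma double_count m (c : Q5 -> 'I_m) (A : 'M[nat]_m) i j :
  perfect_colouring c A ->
  #|[set v | c v == i]| * A i j = #|[set v | c v == j]| * A j i.
Proof.
case=> _ Hp.
pose S i j := \sum_v \sum_w (((adjQ5 v w && (c v == i)) && (c w == j)) : nat).
have E : forall i j, S i j = #|[set v | c v == i]| * A i j.
  move=> i' j'; rewrite -sum_nat_cond_const big_mkcond /=; apply: eq_bigr => v _.
  case: eqP => [<-|_].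
  - rewrite -Hp -sum1dep_card [RHS]big_mkcond /=; apply: eq_bigr => w _.
    by rewrite ?eqxx; case: (adjQ5 v w); case: (c w == j').
  - by rewrite big1 // => w _; rewrite andbF.
rewrite -!E /S exchange_big /=; apply: eq_bigr => v _; apply: eq_bigr => w _.
by rewrite adj_sym -!andbA [X in _ && X]andbC.
Qed.

Lemma sum_ns m (c : Q5 -> 'I_m) : \sum_(i : 'I_m) #|[set v | c v == i]| = 32.
Proof.
have E : forall i, #|[set v | c v == i]| = \sum_v (c v == i : nat).
  by move=> i; rewrite -sum1dep_card big_mkcond; apply: eq_bigr => v _; case: eqP.
rewrite (eq_bigr _ (fun i _ => E i)) exchange_big /=.
rewrite (eq_bigr (fun _ => 1)); last first.
  move=> v _; rewrite (bigD1 (c v)) //= eqxx big1 ?addn0 // => i.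
  by rewrite eq_sym => /negbTE ->.
by rewrite sum_nat_const card_ffun card_bool card_ord.
Qed.

Lemma ns_pos m (c : Q5 -> 'I_m) i : colouring c -> 0 < #|[set v | c v == i]|.
Proof. by move=> Hcol; have [v Hv] := Hcol i; apply/card_gt0P; exists v; rewrite inE Hv. Qed.

Definition rowsOf m' (A : 'M[nat]_m'.+1) : seq (seq nat) :=
  [seq [seq A (inord i) (inord j) | j <- iota 0 m'.+1] | i <- iota 0 m'.+1].

Lemma Ar_rowsOf_nat m' (A : 'M[nat]_m'.+1) i j : i < m'.+1 -> j < m'.+1 ->
  Ar (rowsOf A) i j = A (inord i) (inord j).
Proof.
move=> Hi Hj; rewrite /Ar /rowsOf (nth_map 0) ?size_iota // nth_iota //.
by rewrite (nth_map 0) ?size_iota // nth_iota.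
Qed.

Lemma Ar_rowsOf m' (A : 'M[nat]_m'.+1) (i j : 'I_m'.+1) : Ar (rowsOf A) i j = A i j.
Proof. by rewrite Ar_rowsOf_nat // !inord_val. Qed.

Lemma mxl_rowsOf m' (A : 'M[nat]_m'.+1) : mxl m'.+1 (rowsOf A) = A.
Proof. by apply/matrixP => i j; rewrite mxE; apply: Ar_rowsOf. Qed.

Lemma perm_of m' (sg : seq nat) :
  size sg = m'.+1 -> uniq sg -> all (fun x => x < m'.+1) sg ->
  exists s : 'S_m'.+1, forall i : 'I_m'.+1, val (s i) = nth 0 sg i.
Proof.
move=> Ssg Usg /allP Hlt.
pose g (i : 'I_m'.+1) : 'I_m'.+1 := inord (nth 0 sg i).
have Hg : forall i : 'I_m'.+1, val (g i) = nth 0 sg i.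
  by move=> i; apply: inordK; rewrite Hlt // mem_nth // Ssg.
have ginj : injective g.
  move=> i j /(congr1 val); rewrite !Hg => /eqP; rewrite nth_uniq ?Ssg //.
  by move/eqP/val_inj.
by exists (perm ginj) => i; rewrite permE Hg.
Qed.

Lemma closure_ok m' perms rowsL r :
  all (fun sg => [&& size sg == m'.+1, uniq sg & all (fun x => x < m'.+1) sg]) perms ->
  closureb m'.+1 perms rowsL r ->
  exists s : 'S_m'.+1, relabel s (mxl m'.+1 r) \in map (mxl m'.+1) rowsL.
Proof.
move=> /allP Hp /hasP [sg Hsg /hasP [r' Hr' Hrel]].
have /and3P [/eqP S1 U1 A1] := Hp sg Hsg.
have [s Hs] := perm_of S1 U1 A1.
exists s; apply/mapP; exists r' => //.
apply/matrixP => i j; rewrite !mxE !Hs.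
have Hi : nat_of_ord i \in iota 0 m'.+1 by rewrite mem_iota0.
have Hj : nat_of_ord j \in iota 0 m'.+1 by rewrite mem_iota0.
by move: Hrel => /allP /(_ _ Hi) /allP /(_ _ Hj) /eqP.
Qed.

Lemma srchall_true m' (c : Q5 -> 'I_m'.+1) (A : 'M[nat]_m'.+1) :
  perfect_colouring c A -> srchall m'.+1 (rowsOf A) = true.
Proof.
move=> Hc; rewrite /srchall allS_all; apply/allP => c0.
rewrite mem_sort mem_iota0 => Hc0.
have [c' [Hc' H0]] := col_at0 (Ordinal Hc0) Hc.
have HP := col_to_Pn (An := Ar (rowsOf A)) Hc' (@Ar_rowsOf m' A).
have E : map (fun l => val (c' (V l))) (iota 0 1) = [:: c0] by rewrite /= H0.
by have := srch_complete HP (d := 31) (n := 1) erefl isT; rewrite E.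
Qed.

Lemma backward m' rowsL wits (A : 'M[nat]_m'.+1) s :
  all (fun r' => final m'.+1 (Ar r') (nth [::] wits (index r' rowsL))) rowsL ->
  relabel s A \in map (mxl m'.+1) rowsL -> exists c, perfect_colouring c A.
Proof.
move=> /allP Hw /mapP [r' Hr' E].
have HP := final_sound (Hw r' Hr').
have HA : forall i j : 'I_m'.+1, Ar r' i j = mxl m'.+1 r' i j by move=> i j; rewrite mxE.
have Hc := Pn_to_col HP HA.
rewrite -E in Hc.
by exists (fun v => s (inord (nth 0 (nth [::] wits (index r' rowsL)) (enc v)))); apply: relabel_col.
Qed.

Lemma supp_of n1 n2 x y : 0 < n1 -> 0 < n2 -> n1 * x = n2 * y -> (x == 0) == (y == 0).
Proof. by move=> H1 H2; case: x => [|x]; case: y => [|y] //=; nia. Qed.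

Definition wits2 : seq (seq nat) :=
[:: [::0;1;1;0;1;0;0;1;1;0;0;1;0;1;1;0;1;0;0;1;0;1;1;0;0;1;1;0;1;0;0;1];
    [::0;0;1;1;1;1;0;0;1;1;0;0;0;0;1;1;1;1;0;0;0;0;1;1;0;0;1;1;1;1;0;0];
    [::0;0;0;0;1;1;1;1;1;1;1;1;1;1;1;1;1;1;1;1;1;1;1;1;1;1;1;1;0;0;0;0];
    [::0;0;0;0;1;1;1;1;1;1;1;1;0;0;0;0;1;1;1;1;0;0;0;0;0;0;0;0;1;1;1;1];
    [::0;0;0;0;0;0;0;0;1;1;1;1;1;1;1;1;1;1;1;1;1;1;1;1;0;0;0;0;0;0;0;0];
    [::0;0;0;0;0;0;0;0;0;0;0;0;0;0;0;0;1;1;1;1;1;1;1;1;1;1;1;1;1;1;1;1]].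
Definition wits3 : seq (seq nat) :=
[:: [::0;1;2;2;2;2;0;1;2;2;1;0;1;0;2;2;2;2;1;0;1;0;2;2;0;1;2;2;2;2;0;1];
    [::0;1;1;0;1;0;0;1;2;2;2;2;2;2;2;2;2;2;2;2;2;2;2;2;1;0;0;1;0;1;1;0];
    [::0;1;1;2;1;2;2;2;1;2;2;2;2;2;2;1;1;2;2;2;2;2;2;1;2;2;2;1;2;1;1;0];
    [::0;0;2;2;2;2;1;1;2;2;1;1;1;1;2;2;2;2;1;1;1;1;2;2;1;1;2;2;2;2;0;0];
    [::0;0;2;2;2;2;0;0;2;2;1;1;1;1;2;2;2;2;1;1;1;1;2;2;0;0;2;2;2;2;0;0];
    [::0;0;1;1;1;1;0;0;2;2;2;2;2;2;2;2;2;2;2;2;2;2;2;2;1;1;0;0;0;0;1;1];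
    [::0;0;0;0;1;1;1;1;2;2;2;2;2;2;2;2;2;2;2;2;2;2;2;2;1;1;1;1;0;0;0;0];
    [::0;0;0;0;0;0;0;0;2;2;2;2;2;2;2;2;2;2;2;2;2;2;2;2;1;1;1;1;1;1;1;1]].

Lemma wits2_ok : all (fun r' => final 2 (Ar r') (nth [::] wits2 (index r' rowsL2))) rowsL2.
Proof. by vm_compute. Qed.
Lemma wits3_ok : all (fun r' => final 3 (Ar r') (nth [::] wits3 (index r' rowsL3))) rowsL3.
Proof. by vm_compute. Qed.
Lemma perms2_ok : all (fun sg => [&& size sg == 2, uniq sg & all (fun x => x < 2) sg]) perms2.
Proof. by vm_compute. Qed.
Lemma perms3_ok : all (fun sg => [&& size sg == 3, uniq sg & all (fun x => x < 3) sg]) perms3.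
Proof. by vm_compute. Qed.

Lemma list2E : list2 = map (mxl 2) rowsL2. Proof. by []. Qed.
Lemma list3E : list3 = map (mxl 3) rowsL3. Proof. by []. Qed.

Lemma forward3 (c : Q5 -> 'I_3) (A : 'M[nat]_3) :
  perfect_colouring c A -> exists s : 'S_3, relabel s A \in list3.
Proof.
move=> Hc; have [Hcol _] := Hc.
set r := rowsOf A.
have HP := col_to_Pn (An := Ar r) Hc (@Ar_rowsOf 2 A).
have RS : forall i, i < 3 -> Ar r i 0 + Ar r i 1 + Ar r i 2 = 5.
  move=> i Hi; have := Pn_rowsum HP Hi.
  by rewrite !big_nat_recr //= big_geq.
pose n i := #|[set v | c v == (inord i : 'I_3)]|.
have Hn : forall i, 0 < n i by move=> i; exact: ns_pos.
have Hsum : n 0 + n 1 + n 2 = 32.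
  have := sum_ns c; rewrite (eq_bigr (fun i : 'I_3 => n i)); last by move=> i _; rewrite /n inord_val.
  by rewrite -(big_mkord xpredT n) !big_nat_recr //= big_geq.
have Hcnt : forall i j, i < 3 -> j < 3 -> n i * Ar r i j = n j * Ar r j i.
  by move=> i j Hi Hj; rewrite !Ar_rowsOf_nat //; exact: double_count.
clearbody n.
have E02 : Ar r 0 2 = 5 - Ar r 0 0 - Ar r 0 1 by have := RS 0 isT; lia.
have E12 : Ar r 1 2 = 5 - Ar r 1 0 - Ar r 1 1 by have := RS 1 isT; lia.
have E22 : Ar r 2 2 = 5 - Ar r 2 0 - Ar r 2 1 by have := RS 2 isT; lia.
have Hr : r = [:: [:: Ar r 0 0; Ar r 0 1; Ar r 0 2]; [:: Ar r 1 0; Ar r 1 1; Ar r 1 2];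
                  [:: Ar r 2 0; Ar r 2 1; Ar r 2 2]] by [].
rewrite E02 E12 E22 in Hr.
have R0 := RS 0 isT; have R1 := RS 1 isT; have R2 := RS 2 isT.
have M00 : Ar r 0 0 \in iota 0 6 by rewrite mem_iota0; lia.
have M01 : Ar r 0 1 \in iota 0 (6 - Ar r 0 0) by rewrite mem_iota0; lia.
have M10 : Ar r 1 0 \in iota 0 6 by rewrite mem_iota0; lia.
have M11 : Ar r 1 1 \in iota 0 (6 - Ar r 1 0) by rewrite mem_iota0; lia.
have M20 : Ar r 2 0 \in iota 0 6 by rewrite mem_iota0; lia.
have M21 : Ar r 2 1 \in iota 0 (6 - Ar r 2 0) by rewrite mem_iota0; lia.
have T := check3_ok; rewrite /check3 in T.
move: T => /allP /(_ _ M00) /allP /(_ _ M01) /allP /(_ _ M10) /allP /(_ _ M11)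
  /allP /(_ _ M20) /allP /(_ _ M21).
rewrite -Hr /test3.
have -> : supp3 r.
  rewrite /supp3 allS_all; apply/allP => i; rewrite mem_iota0 => Hi.
  rewrite allS_all; apply/allP => j; rewrite mem_iota0 => Hj.
  exact: (supp_of (Hn i) (Hn j) (Hcnt i j Hi Hj)).
have -> : hasN3 r.
  rewrite /hasN3 hasS_has; apply/hasP; exists (n 0).
    rewrite mem_iota; have := Hn 1; have := Hn 2 => H2 H1; apply/andP; split; [exact: Hn | ]. clear -Hsum H1 H2; lia.
  rewrite hasS_has; apply/hasP; exists (n 1).
    by rewrite mem_iota; have H0 := Hn 0; have H1 := Hn 1; have H2 := Hn 2; clear -Hsum H0 H1 H2; lia.
  cbv zeta.
  rewrite (_ : 32 - n 0 - n 1 = n 2); last by clear -Hsum; lia.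
  by rewrite (Hcnt 0 1) // (Hcnt 0 2) // (Hcnt 1 2) // !eqxx.
rewrite (srchall_true Hc) => T.
have [s Hs] := closure_ok perms3_ok T.
by exists s; rewrite list3E -(mxl_rowsOf A); exact: Hs.
Qed.

Lemma forward2 (c : Q5 -> 'I_2) (A : 'M[nat]_2) :
  perfect_colouring c A -> exists s : 'S_2, relabel s A \in list2.
Proof.
move=> Hc; have [Hcol _] := Hc.
set r := rowsOf A.
have HP := col_to_Pn (An := Ar r) Hc (@Ar_rowsOf 1 A).
have RS : forall i, i < 2 -> Ar r i 0 + Ar r i 1 = 5.
  move=> i Hi; have := Pn_rowsum HP Hi.
  by rewrite !big_nat_recr //= big_geq.
pose n i := #|[set v | c v == (inord i : 'I_2)]|.
have Hn : forall i, 0 < n i by move=> i; exact: ns_pos.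
have Hsum : n 0 + n 1 = 32.
  have := sum_ns c; rewrite (eq_bigr (fun i : 'I_2 => n i)); last by move=> i _; rewrite /n inord_val.
  by rewrite -(big_mkord xpredT n) !big_nat_recr //= big_geq.
have Hcnt : forall i j, i < 2 -> j < 2 -> n i * Ar r i j = n j * Ar r j i.
  by move=> i j Hi Hj; rewrite !Ar_rowsOf_nat //; exact: double_count.
clearbody n.
have E01 : Ar r 0 1 = 5 - Ar r 0 0 by have := RS 0 isT; lia.
have E11 : Ar r 1 1 = 5 - Ar r 1 0 by have := RS 1 isT; lia.
have Hr : r = [:: [:: Ar r 0 0; Ar r 0 1]; [:: Ar r 1 0; Ar r 1 1]] by [].
rewrite E01 E11 in Hr.
have R0 := RS 0 isT; have R1 := RS 1 isT.
have M00 : Ar r 0 0 \in iota 0 6 by rewrite mem_iota0; lia.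
have M10 : Ar r 1 0 \in iota 0 6 by rewrite mem_iota0; lia.
have T := check2_ok; rewrite /check2 in T.
move: T => /allP /(_ _ M00) /allP /(_ _ M10).
rewrite -Hr /test2.
have -> : hasN2 r.
  rewrite /hasN2 hasS_has; apply/hasP; exists (n 0).
    by rewrite mem_iota; have H0 := Hn 0; have H1 := Hn 1; clear -Hsum H0 H1; lia.
  by rewrite (_ : 32 - n 0 = n 1) ?(Hcnt 0 1) //; clear -Hsum; lia.
rewrite (srchall_true Hc) => T.
have [s Hs] := closure_ok perms2_ok T.
by exists s; rewrite list2E -(mxl_rowsOf A); exact: Hs.
Qed.

Theorem theorem6p1 :
  (forall A : 'M[nat]_2,
     (exists c : Q5 -> 'I_2, perfect_colouring c A) <->
     (exists s : 'S_2, relabel s A \in list2)) /\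
  (forall A : 'M[nat]_3,
     (exists c : Q5 -> 'I_3, perfect_colouring c A) <->
     (exists s : 'S_3, relabel s A \in list3)).
Proof.
split=> A; split.
- by case=> c Hc; apply: forward2 Hc.
- by case=> s; rewrite list2E; apply: backward wits2_ok.
- by case=> c Hc; apply: forward3 Hc.
- by case=> s; rewrite list3E; apply: backward wits3_ok.
Qed.
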